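(* Let $k\le n$ be positive integers, $x^*\in\mathbb{R}^n$ with support $S^*$, $|S^*|\le k$, $\mathcal{X}^0\in\mathbb{R}^n$ and $\eta>0$. Consider the oracle sequence $(S^t,u^t,\mathcal{X}^t)_{t\ge0}$ and the counts $c^t_i$ defined below. For all $i\in S^*$ and all integers $t\ge1$: if $c^t_i>\frac{2\|\mathcal{X}^0\|_\infty}{\eta|x^*_i|}$, then $i\in S^{t'}$ for all $t'\ge t$.
   Context: $S^*=\{i:x^*_i\neq0\}$. For $v\in\mathbb{R}^n$, $\mathrm{largest}_k(v)$ is the set of indices of the $k$ entries of $v$ with largest absolute value (ties broken by selecting the highest indices). The oracle sequence is defined for all $t\ge0$ by $S^t=\mathrm{largest}_k(\mathcal{X}^t)$, $u^t_i=-\eta x^*_i$ if $i\in S^*\setminus S^t$ and $u^t_i=0$ otherwise, and $\mathcal{X}^{t+1}=\mathcal{X}^t-u^t$. For $i\in\{1,\dots,n\}$, $c^0_i=0$ and, for $t\ge1$, $c^t_i=|\{t'\in\{0,\dots,t-1\}: i\in S^*\setminus S^{t'}\}|$. *)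

(* Defs.v *)
From HB Require Import structures.
From mathcomp Require Import all_boot all_order all_algebra.
Set Implicit Arguments. Unset Strict Implicit. Unset Printing Implicit Defensive.
Import Order.TTheory GRing.Theory Num.Theory.
Local Open Scope ring_scope.

Section Oracle.
Variables (R : realFieldType) (n : nat).

Definition supp (x : 'I_n -> R) : {set 'I_n} := [set i | x i != 0].

Definition norm_inf (x : 'I_n -> R) : R := \big[Num.max/0]_(i < n) `|x i|.

Definition beats (v : 'I_n -> R) (j i : 'I_n) : bool :=
  (`|v i| < `|v j|) || ((`|v i| == `|v j|) && (i < j)%N).

(* largest_k v: the k indices of largest |v_i| (ties -> highest indices),
   i.e. the indices beaten by fewer than k others in the strict total order. *)
Definition largest_k (k : nat) (v : 'I_n -> R) : {set 'I_n} :=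
  [set i | (#|[set j | beats v j i]| < k)%N].

Variables (k : nat) (xs X0 : 'I_n -> R) (eta : R).

Fixpoint Xo (t : nat) : 'I_n -> R :=
  match t with
  | 0 => X0
  | t'.+1 =>
      let X := Xo t' in
      let S := largest_k k X in
      fun i => X i - (if (i \in supp xs) && (i \notin S) then - (eta * xs i) else 0)
  end.

Definition So (t : nat) : {set 'I_n} := largest_k k (Xo t).

Definition uo (t : nat) : 'I_n -> R :=
  fun i => if (i \in supp xs) && (i \notin So t) then - (eta * xs i) else 0.

Definition co (t : nat) (i : 'I_n) : nat :=
  count (fun t' => (i \in supp xs) && (i \notin So t')) (iota 0 t).

End Oracle.

(* Main.v *)
Require Import Defs.
From HB Require Import structures.
From mathcomp Require Import all_boot all_order all_algebra.
From mathcomp Require Import lra.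
Import Order.TTheory GRing.Theory Num.Theory.
Local Open Scope ring_scope.

Lemma Xo_formula (R : realFieldType) (n k : nat) (xs X0 : 'I_n -> R) (eta : R) t i :
  Xo k xs X0 eta t i = X0 i + (co k xs X0 eta t i)%:R * (eta * xs i).
Proof.
elim: t => [|t IH]; first by rewrite /co /= mul0r addr0.
rewrite /= IH /co -addn1 iotaD count_cat /= natrD addn0.
rewrite -/(So k xs X0 eta t).
case: ((i \in supp xs) && (i \notin So k xs X0 eta t)) => /=.
  by rewrite opprK mulr1n mulrDl mul1r addrA.
by rewrite subr0 addr0.
Qed.

Lemma co_mono (R : realFieldType) (n k : nat) (xs X0 : 'I_n -> R) (eta : R) t t' i :
  (t <= t')%N -> (co k xs X0 eta t i <= co k xs X0 eta t' i)%N.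
Proof.
move=> le; rewrite /co -(subnKC le) iotaD count_cat; exact: leq_addr.
Qed.

Lemma big_max_ge (R : realFieldType) (n : nat) (x : 'I_n -> R) (s : seq 'I_n) :
  0 <= \big[Num.max/0]_(i <- s) `|x i| /\
  forall j, j \in s -> `|x j| <= \big[Num.max/0]_(i <- s) `|x i|.
Proof.
elim: s => [|a s [H0 H]]; first by rewrite big_nil.
rewrite big_cons; split.
  by rewrite le_max H0 orbT.
move=> j; rewrite inE => /orP [/eqP -> | js]; first by rewrite le_max lexx.
by rewrite le_max (H _ js) orbT.
Qed.

Lemma norm_inf_ge (R : realFieldType) (n : nat) (x : 'I_n -> R) j :
  `|x j| <= norm_inf x.
Proof.
have [_ H] := @big_max_ge R n x (index_enum 'I_n).
rewrite /norm_inf; apply: H; exact: mem_index_enum.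
Qed.

Lemma norm_inf_ge0 (R : realFieldType) (n : nat) (x : 'I_n -> R) :
  0 <= norm_inf x.
Proof.
have [H _] := @big_max_ge R n x (index_enum 'I_n).
exact: H.
Qed.

Theorem lemmaC2 (R : realFieldType) (n k : nat) (xs X0 : 'I_n -> R) (eta : R) :
  (0 < k)%N -> (k <= n)%N ->
  (#|supp xs| <= k)%N ->
  0 < eta ->
  forall i : 'I_n, i \in supp xs ->
  forall t : nat, (1 <= t)%N ->
  (co k xs X0 eta t i)%:R > 2 * norm_inf X0 / (eta * `|xs i|) ->
  forall t' : nat, (t <= t')%N -> i \in So k xs X0 eta t'.
Proof.
move=> k0 kn hs eta0 i hi t _ hc t' le.
have xi0 : xs i != 0 by move: hi; rewrite inE.
have pos : 0 < eta * `|xs i| by rewrite mulr_gt0 // normr_gt0.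
set M := norm_inf X0.
set c := co k xs X0 eta t' i.
have hc' : 2 * M < c%:R * (eta * `|xs i|).
  rewrite -ltr_pdivrMr //; apply: lt_le_trans hc _.
  by rewrite ler_nat co_mono.
have big : M < `|Xo k xs X0 eta t' i|.
  rewrite Xo_formula -/c.
  have h1 : `|X0 i| <= M := @norm_inf_ge R n X0 i.
  have h2 : c%:R * (eta * `|xs i|) = `|c%:R * (eta * xs i)|.
    by rewrite normrM normrM (gtr0_norm eta0) ger0_norm.
  have h3 := lerB_normD (c%:R * (eta * xs i)) (X0 i).
  rewrite addrC; apply: lt_le_trans h3.
  rewrite -h2; move: hc' h1; set a := c%:R * _; set b := `|X0 i|.
  move=> hc' h1.
  lra.
have hout : forall j, j \notin supp xs -> `|Xo k xs X0 eta t' j| <= M.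
  move=> j; rewrite inE negbK => /eqP xj.
  by rewrite Xo_formula xj !mulr0 addr0 norm_inf_ge.
rewrite /So /largest_k inE.
have sub : [set j | beats (Xo k xs X0 eta t') j i] \subset supp xs :\ i.
  apply/subsetP => j; rewrite !inE /beats => hb.
  apply/andP; split.
    apply/negP => /eqP ji; move: hb; rewrite ji ltxx eqxx ltnn //.
  case: (boolP (j \in supp xs)) => [|hn]; first by rewrite inE.
  have hj := hout j hn.
  move: hb => /orP [h | /andP [/eqP h _]].
    by move: (lt_trans (le_lt_trans hj big) h); rewrite ltxx.
  by move: big; rewrite h => /(le_lt_trans hj); rewrite ltxx.
apply: leq_ltn_trans (subset_leq_card sub) _.
move: hs; rewrite (cardsD1 i) hi add1n.
exact: id.
Qed.
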